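(* Let $\beta=(\beta_{ij})_{i,j\ge 0,\ i+j\le 6}$ be a real sequence such that $\mathcal M(3)(\beta)$ is positive semidefinite, $\mathcal M(2)(\beta)$ is positive definite, and $\operatorname{rank}\mathcal M(3)=\operatorname{card}\mathcal V=7$, where $\mathcal V=\{(x_1,y_1),\dots,(x_7,y_7)\}$ is the algebraic variety of $\mathcal M(3)$. Suppose the columns $\mathcal B_1=\{1,X,Y,X^2,XY,Y^2,X^3\}$ form a basis of the column space of $\mathcal M(3)$. Then $\beta$ has a representing measure if and only if $\mathcal M(3)$ is weakly consistent and, for all $i,j\ge0$ with $0\le i+j\le 2$, $$\Lambda_\beta\big(x^iy^j(x^4-a_{00}-a_{10}x-a_{01}y-a_{20}x^2-a_{11}xy-a_{02}y^2-a_{30}x^3)\big)=0,$$ where $(a_{00},a_{10},a_{01},a_{20},a_{11},a_{02},a_{30})^T=W_{\mathcal B_1}^{-1}(x_1^4,\dots,x_7^4)^T$.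
   Context: The moment matrix $\mathcal M(3)(\beta)$ has rows and columns indexed by $1,X,Y,X^2,XY,Y^2,X^3,X^2Y,XY^2,Y^3$ in this order, with entry $\beta_{i+k,j+l}$ in row $X^iY^j$ and column $X^kY^l$; $\mathcal M(2)(\beta)$ is its principal submatrix indexed by monomials of degree $\le 2$. For $p(x,y)=\sum a_{ij}x^iy^j$ of degree $\le 3$, $p(X,Y)=\sum a_{ij}X^iY^j$ is the corresponding linear combination of columns. The algebraic variety is $\mathcal V=\bigcap\{\mathcal Z(p):\deg p\le 3,\ p(X,Y)=\mathbf 0\}$ with $\mathcal Z(p)$ the real zero set of $p$. The Riesz functional $\Lambda_\beta$ on polynomials of degree $\le 6$ is $\Lambda_\beta(\sum a_{ij}x^iy^j)=\sum a_{ij}\beta_{ij}$. A representing measure is a positive Borel measure $\mu$ on $\mathbb R^2$ with $\beta_{ij}=\int x^iy^j\,d\mu$ for $i+j\le 6$. $\mathcal M(3)$ (or $\beta$) is weakly consistent if every polynomial $p$ of degree $\le 3$ vanishing on $\mathcal V$ satisfies $p(X,Y)=\mathbf 0$. The generalized Vandermonde matrix $W$ is the $7\times 10$ matrix whose $k$-th row is $(1,x_k,y_k,x_k^2,x_ky_k,y_k^2,x_k^3,x_k^2y_k,x_ky_k^2,y_k^3)$, with columns labeled $1,X,Y,\dots,Y^3$; for a set $\mathcal B$ of column labels, $W_{\mathcal B}$ is the submatrix of $W$ consisting of the columns in $\mathcal B$ (in the given order). *)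

(* Defs.v *)
From HB Require Import structures.
From mathcomp Require Import all_boot all_order all_algebra.
From mathcomp Require Import all_classical all_reals all_analysis.
Set Implicit Arguments. Unset Strict Implicit. Unset Printing Implicit Defensive.
Import Order.TTheory GRing.Theory Num.Theory.
Local Open Scope ring_scope.

Definition mono_exps : seq (nat * nat) :=
  [:: (0,0); (1,0); (0,1); (2,0); (1,1); (0,2); (3,0); (2,1); (1,2); (0,3)]%N.
Definition mono (k : 'I_10) : nat * nat := nth (0,0)%N mono_exps k.

Section Moments.
Variable R : realType.

(* A (truncated) bivariate sequence; only entries with i+j <= 6 are ever used. *)
Definition M3 (beta : nat -> nat -> R) : 'M[R]_10 :=
  \matrix_(r < 10, c < 10) beta ((mono r).1 + (mono c).1)%N ((mono r).2 + (mono c).2)%N.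

Definition M2 (beta : nat -> nat -> R) : 'M[R]_6 :=
  \matrix_(r < 6, c < 6) M3 beta (widen_ord (isT : (6 <= 10)%N) r)
                               (widen_ord (isT : (6 <= 10)%N) c).

Definition psd n (A : 'M[R]_n) : Prop := forall v : 'cV[R]_n, 0 <= (v^T *m A *m v) 0 0.
Definition pd n (A : 'M[R]_n) : Prop :=
  forall v : 'cV[R]_n, v != 0 -> 0 < (v^T *m A *m v) 0 0.

Definition peval3 (a : 'cV[R]_10) (z : R * R) : R :=
  \sum_(k < 10) a k 0 * z.1 ^+ (mono k).1 * z.2 ^+ (mono k).2.

(* p(X,Y) = sum a_k (column k of M(3)) = M(3) *m a. *)
Definition colpoly (beta : nat -> nat -> R) (a : 'cV[R]_10) : 'cV[R]_10 := M3 beta *m a.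

Definition variety (beta : nat -> nat -> R) (z : R * R) : Prop :=
  forall a : 'cV[R]_10, colpoly beta a = 0 -> peval3 a z = 0.

Definition weakly_consistent (beta : nat -> nat -> R) : Prop :=
  forall a : 'cV[R]_10, (forall z, variety beta z -> peval3 a z = 0) -> colpoly beta a = 0.

Definition B1 (k : 'I_7) : 'I_10 := widen_ord (isT : (7 <= 10)%N) k.

Definition cols_basis m n p (f : 'I_p -> 'I_n) (A : 'M[R]_(m, n)) : Prop :=
  row_free (colsub f A)^T /\ ((colsub f A)^T == A^T)%MS.

Definition Wmx (pts : 'I_7 -> R * R) : 'M[R]_(7, 10) :=
  \matrix_(k < 7, c < 10) ((pts k).1 ^+ (mono c).1 * (pts k).2 ^+ (mono c).2).
Definition WB p (f : 'I_p -> 'I_10) (pts : 'I_7 -> R * R) : 'M[R]_(7, p) :=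
  colsub f (Wmx pts).

(* Riesz functional on a polynomial given as a list of terms (coef, (i, j))
   meaning sum coef * x^i y^j. *)
Definition Riesz (beta : nat -> nat -> R) (s : seq (R * (nat * nat))) : R :=
  \sum_(t <- s) t.1 * beta t.2.1 t.2.2.

Definition shifted_relation (a : 'cV[R]_7) (i j : nat) : seq (R * (nat * nat)) :=
  (1, (i + 4, j)%N) ::
  [seq (- a k 0, (i + (mono (B1 k)).1, j + (mono (B1 k)).2)%N) | k <- enum 'I_7].

Definition has_rep_measure (beta : nat -> nat -> R) : Prop :=
  exists mu : {measure set (R * R)%type -> \bar R},
    forall i j : nat, (i + j <= 6)%N ->
      mu.-integrable setT (fun z : R * R => (z.1 ^+ i * z.2 ^+ j)%:E) /\
      (\int[mu]_z (z.1 ^+ i * z.2 ^+ j)%:E = (beta i j)%:E)%E.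

End Moments.

(* Main.v *)
Require Import Defs.
From HB Require Import structures.
From mathcomp Require Import all_boot all_order all_algebra.
From mathcomp Require Import all_classical all_reals all_analysis.
From mathcomp Require Import measurable_realfun.
From mathcomp.zify Require Import zify.
From mathcomp.algebra_tactics Require Import ring lra.
Import Order.TTheory GRing.Theory Num.Theory.
Local Open Scope ring_scope.
Set Implicit Arguments. Unset Strict Implicit. Unset Printing Implicit Defensive.


Section Alg.
Variable R : realType.

Definition mon (e : nat * nat) (z : R * R) : R := z.1 ^+ e.1 * z.2 ^+ e.2.
Definition eadd (e f : nat * nat) : nat * nat := (e.1 + f.1, e.2 + f.2)%N.
Definition bb (beta : nat -> nat -> R) (e : nat * nat) : R := beta e.1 e.2.

Lemma monD e f z : mon (eadd e f) z = mon e z * mon f z.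
Proof. rewrite /mon /= !exprD; ring. Qed.

Lemma M3E beta r c : M3 beta r c = bb beta (eadd (mono r) (mono c)).
Proof. by rewrite mxE. Qed.

Lemma peval3E (a : 'cV[R]_10) z : peval3 a z = \sum_k a k 0 * mon (mono k) z.
Proof. by apply: eq_bigr => k _; rewrite /mon mulrA. Qed.

Lemma sum_delta n (j : 'I_n) (F : 'I_n -> R) : \sum_i (i == j)%:R * F i = F j.
Proof.
rewrite (bigD1 j) //= eqxx mul1r big1 ?addr0 // => i /negbTE ->; by rewrite mul0r.
Qed.

Definition ext7 (v : 'I_7 -> R) : 'cV[R]_10 := \col_i \sum_(k < 7) (i == B1 k)%:R * v k.

Lemma sum_ext7 v (F : 'I_10 -> R) : \sum_i ext7 v i 0 * F i = \sum_k v k * F (B1 k).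
Proof.
under eq_bigr do rewrite mxE big_distrl /=.
rewrite exchange_big /=; apply: eq_bigr => k _.
under eq_bigr do rewrite -mulrA [v k * _]mulrC mulrA.
by rewrite -big_distrl /= sum_delta mulrC.
Qed.

Lemma colrel beta (hb : cols_basis B1 (M3 beta)) (j : 'I_10) :
  exists w : 'I_7 -> R, forall r : 'I_10, M3 beta r j = \sum_k w k * M3 beta r (B1 k).
Proof.
case: hb => _ /andP[_ H].
have /submxP[D HD] := submx_trans (row_sub j (M3 beta)^T) H.
exists (fun k => D 0 k) => r.
have := congr1 (fun M : 'M[R]_(1,10) => M 0 r) HD; rewrite !mxE => ->.
by apply: eq_bigr => k _; rewrite !mxE.
Qed.

Lemma keyB1 (k : 'I_7) :
  (8 * (mono (B1 k)).1 + 9 * (mono (B1 k)).2 <= 24)%N /\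
  ((mono (B1 k)).1 + (mono (B1 k)).2 <= 3)%N.
Proof. by case: k => [[|[|[|[|[|[|[|k]]]]]]] Hk]. Qed.

Lemma mono_surj (e : nat * nat) : (e.1 + e.2 <= 3)%N -> exists r : 'I_10, mono r = e.
Proof.
case: e => [[|[|[|[|x]]]] [|[|[|[|y]]]]] //= _.
- by exists (@Ordinal 10 0 isT).
- by exists (@Ordinal 10 2 isT).
- by exists (@Ordinal 10 5 isT).
- by exists (@Ordinal 10 9 isT).
- by exists (@Ordinal 10 1 isT).
- by exists (@Ordinal 10 4 isT).
- by exists (@Ordinal 10 8 isT).
- by exists (@Ordinal 10 3 isT).
- by exists (@Ordinal 10 7 isT).
- by exists (@Ordinal 10 6 isT).
Qed.


Lemma B1_inj : injective B1.
Proof. by move=> x y /(congr1 val) /= /val_inj. Qed.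

Definition kvec (j : 'I_10) (w : 'I_7 -> R) : 'cV[R]_10 :=
  \col_i ((i == j)%:R - ext7 w i 0).

Lemma sum_kvec j w (F : 'I_10 -> R) :
  \sum_i kvec j w i 0 * F i = F j - \sum_k w k * F (B1 k).
Proof.
under eq_bigr do rewrite mxE mulrBl.
by rewrite sumrB sum_delta sum_ext7.
Qed.

Lemma kvec_ker beta j w :
  (forall r : 'I_10, M3 beta r j = \sum_k w k * M3 beta r (B1 k)) ->
  colpoly beta (kvec j w) = 0.
Proof.
move=> Hw; apply/matrixP => r c; rewrite !mxE ord1.
under eq_bigr do rewrite mulrC.
by rewrite sum_kvec Hw subrr.
Qed.

Lemma peval3_kvec j w z :
  peval3 (kvec j w) z = mon (mono j) z - \sum_k w k * mon (mono (B1 k)) z.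
Proof. by rewrite peval3E sum_kvec. Qed.

Lemma peval3_ext7 v z :
  peval3 (ext7 v) z = \sum_k v k * mon (mono (B1 k)) z.
Proof. by rewrite peval3E sum_ext7. Qed.

Lemma colpoly_ext7 beta v (r : 'I_10) :
  colpoly beta (ext7 v) r 0 = \sum_k v k * M3 beta r (B1 k).
Proof.
rewrite !mxE; under eq_bigr do rewrite mulrC.
by rewrite sum_ext7.
Qed.

Lemma WBE (pts : 'I_7 -> R * R) m k : WB B1 pts m k = mon (mono (B1 k)) (pts m).
Proof. by rewrite !mxE. Qed.

Lemma ext7_zero beta v : cols_basis B1 (M3 beta) ->
  colpoly beta (ext7 v) = 0 -> forall k, v k = 0.
Proof.
case=> hf _ H0.
have : (\row_k v k) *m (colsub B1 (M3 beta))^T = 0.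
  apply/matrixP => i r; rewrite !mxE ord1.
  transitivity (colpoly beta (ext7 v) r 0); last by rewrite H0 mxE.
  by rewrite colpoly_ext7; apply: eq_bigr => k _; rewrite !mxE.
move/eqP; rewrite mulmx_free_eq0 // => /eqP /matrixP H k.
by have := H 0 k; rewrite !mxE.
Qed.

Lemma WB_unit beta (pts : 'I_7 -> R * R) :
  (forall z, variety beta z <-> exists k, pts k = z) ->
  cols_basis B1 (M3 beta) -> weakly_consistent beta -> WB B1 pts \in unitmx.
Proof.
move=> hV hb hw.
rewrite -unitmx_tr -row_free_unit -kermx_eq0; apply/rowV0P => u /sub_kermxP Hu.
have H0 : colpoly beta (ext7 (fun k => u 0 k)) = 0.
  apply: hw => z /hV [m <-]; rewrite peval3_ext7.
  transitivity ((u *m (WB B1 pts)^T) 0 m); last by rewrite Hu mxE.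
  by rewrite mxE; apply: eq_bigr => k _; rewrite !mxE.
have := ext7_zero hb H0 => Hz.
by apply/matrixP => i k; rewrite ord1 Hz mxE.
Qed.


Lemma consistency (D : nat * nat -> R) (w7 w8 w9 a : 'I_7 -> R) :
  (forall k, D (mono (B1 k)) = 0) ->
  (forall e, (e.1 + e.2 <= 3)%N ->
     D (eadd e (2,1)%N) = \sum_k w7 k * D (eadd e (mono (B1 k)))) ->
  (forall e, (e.1 + e.2 <= 3)%N ->
     D (eadd e (1,2)%N) = \sum_k w8 k * D (eadd e (mono (B1 k)))) ->
  (forall e, (e.1 + e.2 <= 3)%N ->
     D (eadd e (0,3)%N) = \sum_k w9 k * D (eadd e (mono (B1 k)))) ->
  (forall i, (i <= 2)%N ->
     D (i + 4, 0)%N = \sum_k a k * D (eadd (i, 0)%N (mono (B1 k)))) ->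
  forall e, (e.1 + e.2 <= 6)%N -> D e = 0.
Proof.
move=> H0 H7 H8 H9 H4.
suff main : forall n e, (8 * e.1 + 9 * e.2 < n)%N -> (e.1 + e.2 <= 6)%N -> D e = 0.
  by move=> e; apply: (main (8 * e.1 + 9 * e.2).+1 e).
elim=> [//|n IH] [x y] /= Hn Hd.
have IHs : forall e, (8 * e.1 + 9 * e.2 < 8 * x + 9 * y)%N -> (e.1 + e.2 <= 6)%N -> D e = 0.
  by move=> e h1 h2; apply: IH => //; lia.
have Hsum : forall (w : 'I_7 -> R) (e : nat * nat),
    (8 * e.1 + 9 * e.2 + 24 < 8 * x + 9 * y)%N -> (e.1 + e.2 + 3 <= 6)%N ->
    \sum_k w k * D (eadd e (mono (B1 k))) = 0.
  move=> w e h1 h2; apply: big1 => k _; rewrite IHs ?mulr0 //; 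
  have [kb1 kb2] := keyB1 k; rewrite /eadd /=; lia.
have B1c : forall k : 'I_7, (x, y) = mono (B1 k) -> D (x, y) = 0 by move=> k ->.
case: (leqP 3 y) => y3.
  have -> : (x, y) = eadd (x, y - 3)%N (0, 3)%N by rewrite /eadd /=; congr pair; lia.
  rewrite H9 /=; last by lia.
  by apply: Hsum => /=; lia.
case: y y3 Hn Hd IHs Hsum B1c => [|[|[|y]]] //= y3 Hn Hd IHs Hsum B1c.
- case: (leqP 4 x) => x4.
    have -> : (x, 0)%N = (x - 4 + 4, 0)%N by congr pair; lia.
    rewrite H4; last by lia.
    by apply: Hsum => /=; lia.
  case: x x4 {Hn Hd IHs Hsum} B1c => [|[|[|[|x]]]] //= _ B1c.
  + exact: (B1c (@Ordinal 7 0 isT)).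
  + exact: (B1c (@Ordinal 7 1 isT)).
  + exact: (B1c (@Ordinal 7 3 isT)).
  + exact: (B1c (@Ordinal 7 6 isT)).
- case: (leqP 2 x) => x2.
    have -> : (x, 1)%N = eadd (x - 2, 0)%N (2, 1)%N by rewrite /eadd /=; congr pair; lia.
    rewrite H7 /=; last by lia.
    by apply: Hsum => /=; lia.
  case: x x2 {Hn Hd IHs Hsum} B1c => [|[|x]] //= _ B1c.
  + exact: (B1c (@Ordinal 7 2 isT)).
  + exact: (B1c (@Ordinal 7 4 isT)).
- case: (leqP 1 x) => x1.
    have -> : (x, 2)%N = eadd (x - 1, 0)%N (1, 2)%N by rewrite /eadd /=; congr pair; lia.
    rewrite H8 /=; last by lia.
    by apply: Hsum => /=; lia.
  case: x x1 {Hn Hd IHs Hsum} B1c => [|x] //= _ B1c.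
  + exact: (B1c (@Ordinal 7 5 isT)).
Qed.

End Alg.


Section Rev.
Variable R : realType.
Variables (beta : nat -> nat -> R) (pts : 'I_7 -> R * R).
Hypothesis psdM : psd (M3 beta).
Hypothesis hV : forall z, variety beta z <-> exists k, pts k = z.
Hypothesis hb : cols_basis B1 (M3 beta).
Hypothesis WBu : WB B1 pts \in unitmx.
Variable a : 'cV[R]_7.
Hypothesis aE : a = invmx (WB B1 pts) *m \col_(k < 7) ((pts k).1 ^+ 4).
Hypothesis hR : forall i, (i <= 2)%N -> Riesz beta (shifted_relation a i 0) = 0.

Lemma RieszS i j : Riesz beta (shifted_relation a i j) =
  beta (i + 4)%N j - \sum_k a k 0 * beta (i + (mono (B1 k)).1)%N (j + (mono (B1 k)).2)%N.
Proof.
rewrite /Riesz /shifted_relation big_cons big_map /= mul1r; congr (_ + _).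
rewrite -sumrN big_enum /=; apply: eq_bigr => k _; by rewrite mulNr.
Qed.

Definition rho : 'cV[R]_7 := invmx (WB B1 pts)^T *m \col_k bb beta (mono (B1 k)).

Lemma rhoE k : \sum_m rho m 0 * mon (mono (B1 k)) (pts m) = bb beta (mono (B1 k)).
Proof.
have WBu' : (WB B1 pts)^T \in unitmx by rewrite unitmx_tr.
have := congr1 (fun M : 'cV[R]_7 => M k 0) (mulKVmx WBu' (\col_k bb beta (mono (B1 k)))).
rewrite /= [in RHS]mxE => <-; rewrite mxE; apply: eq_bigr => m _.
by rewrite !mxE mulrC.
Qed.

Lemma a_rel m : \sum_k a k 0 * mon (mono (B1 k)) (pts m) = mon (4, 0)%N (pts m).
Proof.
have := congr1 (fun M : 'cV[R]_7 => M m 0) (mulKVmx WBu (\col_(k < 7) ((pts k).1 ^+ 4))).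
rewrite /= [in RHS]mxE -aE /mon /= expr0 mulr1 => <-; rewrite mxE; apply: eq_bigr => k _.
by rewrite !mxE mulrC.
Qed.

Lemma kerrel (j : 'I_10) : exists w : 'I_7 -> R,
  (forall r, M3 beta r j = \sum_k w k * M3 beta r (B1 k)) /\
  forall m, mon (mono j) (pts m) = \sum_k w k * mon (mono (B1 k)) (pts m).
Proof.
have [w Hw] := colrel hb j; exists w; split => // m.
have hv : variety beta (pts m) by apply/hV; exists m.
have := hv _ (kvec_ker Hw); rewrite peval3_kvec => /eqP; rewrite subr_eq0 => /eqP.
done.
Qed.

Definition Dfun (e : nat * nat) := bb beta e - \sum_m rho m 0 * mon e (pts m).

Lemma sumD (w : 'I_7 -> R) e :
  \sum_k w k * Dfun (eadd e (mono (B1 k))) =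
  \sum_k w k * bb beta (eadd e (mono (B1 k))) -
  \sum_m rho m 0 * mon e (pts m) * \sum_k w k * mon (mono (B1 k)) (pts m).
Proof.
rewrite /Dfun; under eq_bigr do rewrite mulrBr; rewrite sumrB; congr (_ - _).
under eq_bigr do rewrite big_distrr /=.
rewrite exchange_big /=; apply: eq_bigr => m _.
rewrite big_distrr /=; apply: eq_bigr => k _; rewrite monD; ring.
Qed.

Lemma Hrel (j : 'I_10) (w : 'I_7 -> R) :
  (forall r, M3 beta r j = \sum_k w k * M3 beta r (B1 k)) ->
  (forall m, mon (mono j) (pts m) = \sum_k w k * mon (mono (B1 k)) (pts m)) ->
  forall e, (e.1 + e.2 <= 3)%N ->
  Dfun (eadd e (mono j)) = \sum_k w k * Dfun (eadd e (mono (B1 k))).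
Proof.
move=> Hw Hm e he; rewrite sumD; have [r <-] := mono_surj he.
rewrite /Dfun; congr (_ - _).
  move: (Hw r); rewrite M3E; under eq_bigr do rewrite M3E; done.
by apply: eq_bigr => m _; rewrite monD Hm mulrA.
Qed.

Lemma H4rel i : (i <= 2)%N ->
  Dfun (i + 4, 0)%N = \sum_k a k 0 * Dfun (eadd (i, 0)%N (mono (B1 k))).
Proof.
move=> hi; rewrite sumD; have := hR hi; rewrite RieszS => /eqP; rewrite subr_eq0 => /eqP h.
rewrite /Dfun; congr (_ - _); first exact: h.
have -> : ((i + 4)%N, 0%N) = eadd (i, 0)%N (4, 0)%N by [].
by apply: eq_bigr => m _; rewrite monD a_rel mulrA.
Qed.

Lemma Dzero e : (e.1 + e.2 <= 6)%N -> bb beta e = \sum_m rho m 0 * mon e (pts m).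
Proof.
move=> he; apply/eqP; rewrite -subr_eq0; apply/eqP.
have [w7 [Hw7 Hm7]] := kerrel (@Ordinal 10 7 isT).
have [w8 [Hw8 Hm8]] := kerrel (@Ordinal 10 8 isT).
have [w9 [Hw9 Hm9]] := kerrel (@Ordinal 10 9 isT).
apply: (@consistency _ Dfun w7 w8 w9 (fun k => a k 0)) => //.
- by move=> k; rewrite /Dfun rhoE subrr.
- exact: (Hrel Hw7 Hm7).
- exact: (Hrel Hw8 Hm8).
- exact: (Hrel Hw9 Hm9).
- exact: H4rel.
Qed.


Lemma rho_ge0 k : 0 <= rho k 0.
Proof.
pose lam := invmx (WB B1 pts) *m \col_(m < 7) (m == k)%:R.
have lamE : forall m, \sum_l lam l 0 * mon (mono (B1 l)) (pts m) = (m == k)%:R.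
  move=> m.
  have := congr1 (fun M : 'cV[R]_7 => M m 0) (mulKVmx WBu (\col_(m < 7) (m == k)%:R : 'cV[R]_7)).
  rewrite /= [in RHS]mxE => <-; rewrite mxE; apply: eq_bigr => l _.
  by rewrite !mxE mulrC.
pose v := ext7 (fun l => lam l 0).
have := psdM v; rewrite mxE.
have -> : \sum_j (v^T *m M3 beta) 0 j * v j 0 =
    \sum_l lam l 0 * \sum_l' lam l' 0 * M3 beta (B1 l') (B1 l).
  under eq_bigr do rewrite mulrC.
  rewrite /v sum_ext7; apply: eq_bigr => l _; congr (_ * _).
  rewrite mxE; under eq_bigr do rewrite [_^T _ _]mxE.
  exact: sum_ext7.
have -> : \sum_l lam l 0 * \sum_l' lam l' 0 * M3 beta (B1 l') (B1 l) =
   \sum_m rho m 0 * ((\sum_l lam l 0 * mon (mono (B1 l)) (pts m)) *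
                     (\sum_l' lam l' 0 * mon (mono (B1 l')) (pts m))).
  transitivity (\sum_l \sum_l' \sum_m
     rho m 0 * ((lam l 0 * mon (mono (B1 l)) (pts m)) * (lam l' 0 * mon (mono (B1 l')) (pts m)))).
    apply: eq_bigr => l _; rewrite big_distrr; apply: eq_bigr => l' _ /=.
    rewrite M3E Dzero; last first.
      by have [_ h1] := keyB1 l; have [_ h2] := keyB1 l'; rewrite /eadd /=; lia.
    rewrite !big_distrr; apply: eq_bigr => m _ /=; rewrite monD; ring.
  rewrite exchange_big /=.
  transitivity (\sum_l' \sum_m \sum_l
     rho m 0 * ((lam l 0 * mon (mono (B1 l)) (pts m)) * (lam l' 0 * mon (mono (B1 l')) (pts m)))).
    by apply: eq_bigr => l' _; rewrite exchange_big.
  rewrite exchange_big /=; apply: eq_bigr => m _.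
  rewrite exchange_big /= big_distrl big_distrr /=; apply: eq_bigr => l _.
  rewrite big_distrr !big_distrr /=; apply: eq_bigr => l' _; ring.
under eq_bigr do rewrite !lamE.
rewrite (bigD1 k) //= eqxx big1 ?addr0 ?mulr1 // => m /negbTE ->; by rewrite mul0r mulr0.
Qed.

End Rev.


Section Meas.
Variable R : realType.
Lemma mon_meas e : measurable_fun setT (mon e : R * R -> R).
Proof.
have -> : mon e = (fun z : R * R => z.1 ^+ e.1) \* (fun z : R * R => z.2 ^+ e.2) by [].
apply: measurable_funM.
  by apply: measurable_funX; exact: measurable_fst.
by apply: measurable_funX; exact: measurable_snd.
Qed.

Local Open Scope ereal_scope.
Variables (pts : 'I_7 -> R * R) (r : 'I_7 -> R) (r0 : forall k, (0 <= r k)%R).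

Definition dmeas : {measure set (R * R)%type -> \bar R} :=
  msum (fun n => mscale (NngNum (r0 (inord n))) (@dirac _ _ (pts (inord n)) R)) 7.

Lemma dmeas_ge0 (g : R * R -> \bar R) : measurable_fun setT g -> (forall x, 0 <= g x) ->
  \int[dmeas]_x g x = \sum_(k < 7) (r k)%:E * g (pts k).
Proof.
move=> mg g0; rewrite ge0_integral_measure_sum //; apply: eq_bigr => k _ /=.
rewrite ge0_integral_mscale // integral_dirac // diracE mem_set // mul1e inord_val.
by [].
Qed.

Lemma dmeas_int (f : R * R -> R) : measurable_fun setT f ->
  dmeas.-integrable setT (EFin \o f) /\
  \int[dmeas]_x (f x)%:E = (\sum_(k < 7) r k * f (pts k))%:E.
Proof.
move=> mf; have mfE : measurable_fun setT (EFin \o f) by apply/measurable_EFinP.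
split.
  apply/integrableP; split => //; rewrite dmeas_ge0 //; last first.
    exact: measurableT_comp.
  under eq_bigr do rewrite abse_EFin -EFinM.
  by rewrite sumEFin ltry.
have mp : measurable_fun setT (EFin \o f)^\+ by exact: measurable_funepos.
have mn : measurable_fun setT (EFin \o f)^\- by exact: measurable_funeneg.
rewrite integralE (dmeas_ge0 mp (fun x => funepos_ge0 _ x)).
rewrite (dmeas_ge0 mn (fun x => funeneg_ge0 _ x)).
have ep : forall x, (EFin \o f)^\+ x = (if (0 <= f x)%R then f x else 0%R)%:E.
  by move=> x; rewrite funeposE /= maxEge lee_fin; case: ifP.
have en : forall x, (EFin \o f)^\- x = (if (0 <= f x)%R then 0%R else - f x)%:E.
  move=> x; rewrite funenegE /= maxEge lee_fin oppr_ge0.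
  case: (leP 0%R (f x)) => h; case: ifP => //.
  - move=> hh; have fx0 : f x = 0%R by apply/le_anti; rewrite h hh.
    by rewrite fx0 oppr0.
  - by rewrite ltW.
under eq_bigr do rewrite ep -EFinM.
under [X in _ - X]eq_bigr do rewrite en -EFinM.
rewrite !sumEFin -EFinB -sumrB; congr EFin; apply: eq_bigr => k _.
by case: ifP => _; rewrite ?mulr0 ?subr0 ?sub0r ?mulrN ?opprK.
Qed.

End Meas.


Section Fwd.
Variable R : realType.
Variable beta : nat -> nat -> R.
Variable mu : {measure set (R * R)%type -> \bar R}.
Hypothesis hm : forall i j : nat, (i + j <= 6)%N ->
      mu.-integrable setT (fun z : R * R => (z.1 ^+ i * z.2 ^+ j)%:E) /\
      (\int[mu]_z (z.1 ^+ i * z.2 ^+ j)%:E = (beta i j)%:E)%E.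

Definition evalterms (s : seq (R * (nat * nat))) (z : R * R) : R :=
  \sum_(t <- s) t.1 * mon t.2 z.

Lemma int_terms s : all (fun t : R * (nat * nat) => (t.2.1 + t.2.2 <= 6)%N) s ->
  mu.-integrable setT (fun z => (evalterms s z)%:E) /\
  (\int[mu]_z (evalterms s z)%:E = (Riesz beta s)%:E)%E.
Proof.
elim: s => [_|t s IH /= /andP[ht hs]].
  have -> : (fun z => (evalterms [::] z)%:E) = cst 0%E.
    by apply/funext => z; rewrite /evalterms big_nil.
  by split; [exact: integrable0 | rewrite integral0 /Riesz big_nil].
have [I1 E1] := IH hs; have [I2 E2] := hm ht.
have -> : (fun z => (evalterms (t :: s) z)%:E) =
   (fun z => (t.1%:E * (mon t.2 z)%:E) + (evalterms s z)%:E)%E.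
  by apply/funext => z; rewrite /evalterms big_cons.
split.
  apply: (integrableD measurableT) => //.
  exact: integrableZl.
rewrite integralD //; last exact: integrableZl.
rewrite integralZl // E1.
have -> : (\int[mu]_x (mon t.2 x)%:E = (beta t.2.1 t.2.2)%:E)%E by exact: E2.
by rewrite /Riesz big_cons.
Qed.


Lemma mono_deg (k : 'I_10) : ((mono k).1 + (mono k).2 <= 3)%N.
Proof. by case: k => [[|[|[|[|[|[|[|[|[|[|k]]]]]]]]]] Hk]. Qed.

Definition sqlist (c : 'cV[R]_10) : seq (R * (nat * nat)) :=
  [seq (c i 0 * c j 0, eadd (mono i) (mono j)) | i <- enum 'I_10, j <- enum 'I_10].

Lemma sqlist_deg c : all (fun t : R * (nat * nat) => (t.2.1 + t.2.2 <= 6)%N) (sqlist c).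
Proof.
apply/allP => t /allpairsP [[i j] [_ _ ->]] /=.
by have := mono_deg i; have := mono_deg j; lia.
Qed.

Lemma sqlist_eval c z : evalterms (sqlist c) z = peval3 c z ^+ 2.
Proof.
rewrite /evalterms /sqlist big_allpairs_dep /= expr2 peval3E big_distrl big_enum /=.
apply: eq_bigr => i _; rewrite big_enum big_distrr /=; apply: eq_bigr => j _ /=.
rewrite monD; ring.
Qed.

Lemma sqlist_Riesz c : colpoly beta c = 0 -> Riesz beta (sqlist c) = 0.
Proof.
move=> hc; rewrite /Riesz /sqlist big_allpairs_dep big_enum /=.
apply: big1 => i _; rewrite big_enum /=.
transitivity (c i 0 * colpoly beta c i 0); last by rewrite hc mxE mulr0.
rewrite mxE big_distrr /=; apply: eq_bigr => j _; rewrite M3E /bb; ring.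
Qed.

Lemma ker_ae c : colpoly beta c = 0 ->
  (\forall z \ae mu, setT z -> peval3 c z = 0).
Proof.
move=> hc.
have [I E] := int_terms (sqlist_deg c).
rewrite sqlist_Riesz // in E.
have mf : measurable_fun setT (fun z => (evalterms (sqlist c) z)%:E).
  exact: measurable_int I.
have : (\int[mu]_z `|(evalterms (sqlist c) z)%:E| = 0)%E.
  transitivity (\int[mu]_z (evalterms (sqlist c) z)%:E)%E; last by rewrite E.
  apply: eq_integral => z _; rewrite abse_EFin ger0_norm //.
  by rewrite sqlist_eval sqr_ge0.
move/(ae_eq_integral_abs mu measurableT mf).
apply: filterS => z h /h /= /eqP; rewrite eqe sqlist_eval sqrf_eq0 => /eqP.
done.
Qed.


Lemma ext7_hi (v : 'I_7 -> R) (i : 'I_10) : (7 <= i)%N -> ext7 v i 0 = 0.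
Proof.
move=> hi; rewrite mxE big1 // => k _.
have -> : (i == B1 k) = false.
  apply/negbTE; apply/eqP => /(congr1 val) /= h; have := ltn_ord k; lia.
by rewrite mul0r.
Qed.

Lemma ext7_hi' (v : 'I_7 -> R) (i : 'I_10) : (7 <= i)%N ->
  \sum_(k < 7) (i == B1 k)%:R * v k = 0.
Proof. by move=> hi; have := ext7_hi v hi; rewrite mxE. Qed.

Lemma ext7_of (b : 'cV[R]_10) : (forall i : 'I_10, (7 <= i)%N -> b i 0 = 0) ->
  b = ext7 (fun k => b (B1 k) 0).
Proof.
move=> hb; apply/matrixP => i j; rewrite ord1.
case: (ltnP i 7) => hi; last by rewrite hb // ext7_hi.
have -> : i = B1 (Ordinal hi) by apply/val_inj.
rewrite mxE (bigD1 (Ordinal hi)) //= eqxx mul1r big1 ?addr0 // => k hk.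
have -> : (B1 (Ordinal hi) == B1 k) = false.
  apply/negbTE; apply: contra hk => /eqP /B1_inj ->; by [].
by rewrite mul0r.
Qed.

Lemma peval3D (x y : 'cV[R]_10) (z : R * R) : peval3 (x + y) z = peval3 x z + peval3 y z.
Proof. rewrite !peval3E -big_split /=; apply: eq_bigr => k _; rewrite mxE; ring. Qed.

Lemma peval3Z (s : R) (x : 'cV[R]_10) (z : R * R) : peval3 (s *: x) z = s * peval3 x z.
Proof. rewrite !peval3E big_distrr /=; apply: eq_bigr => k _; rewrite mxE; ring. Qed.

Lemma peval30 z : peval3 (0 : 'cV[R]_10) z = 0.
Proof. by rewrite peval3E big1 // => k _; rewrite mxE mul0r. Qed.

Definition o7 : 'I_10 := @Ordinal 10 7 isT.
Definition o8 : 'I_10 := @Ordinal 10 8 isT.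
Definition o9 : 'I_10 := @Ordinal 10 9 isT.

Lemma var3 (hb : cols_basis B1 (M3 beta)) (w7 w8 w9 : 'I_7 -> R) :
  colpoly beta (kvec o7 w7) = 0 -> colpoly beta (kvec o8 w8) = 0 ->
  colpoly beta (kvec o9 w9) = 0 ->
  forall z, peval3 (kvec o7 w7) z = 0 -> peval3 (kvec o8 w8) z = 0 ->
  peval3 (kvec o9 w9) z = 0 -> variety beta z.
Proof.
move=> k7 k8 k9 z h7 h8 h9 a ha.
pose b := a - a o7 0 *: kvec o7 w7 - a o8 0 *: kvec o8 w8 - a o9 0 *: kvec o9 w9.
have hb0 : forall i : 'I_10, (7 <= i)%N -> b i 0 = 0.
  move=> i hi; rewrite !mxE !ext7_hi' //.
  case: i hi => [[|[|[|[|[|[|[|[|[|[|i]]]]]]]]]] Hi] //= _.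
  - have -> : @Ordinal 10 7 Hi = o7 by apply/val_inj.
    rewrite /= ; ring.
  - have -> : @Ordinal 10 8 Hi = o8 by apply/val_inj.
    rewrite /= ; ring.
  - have -> : @Ordinal 10 9 Hi = o9 by apply/val_inj.
    rewrite /= ; ring.
have kb : colpoly beta b = 0.
  rewrite /colpoly in ha k7 k8 k9 *.
  by rewrite /b !mulmxBr -!scalemxAr ha k7 k8 k9 !scaler0 !subr0.
have bz : b = 0.
  rewrite (ext7_of hb0) in kb.
  have := ext7_zero hb kb => hz.
  rewrite (ext7_of hb0); apply/matrixP => i j; rewrite !mxE big1 // => k _.
  by rewrite hz mulr0.
transitivity (peval3 (b + a o7 0 *: kvec o7 w7 + a o8 0 *: kvec o8 w8 + a o9 0 *: kvec o9 w9) z).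
  by congr peval3; apply/matrixP => i j; rewrite !mxE; ring.
clearbody b; by rewrite !peval3D !peval3Z bz peval30 h7 h8 h9 !mulr0 !addr0.
Qed.

Lemma vanish (hb : cols_basis B1 (M3 beta)) s :
  all (fun t : R * (nat * nat) => (t.2.1 + t.2.2 <= 6)%N) s ->
  (forall z, variety beta z -> evalterms s z = 0) -> Riesz beta s = 0.
Proof.
move=> hs hz.
have [w7 Hw7] := colrel hb o7.
have [w8 Hw8] := colrel hb o8.
have [w9 Hw9] := colrel hb o9.
have k7 := kvec_ker Hw7; have k8 := kvec_ker Hw8; have k9 := kvec_ker Hw9.
have a7 := ker_ae k7; have a8 := ker_ae k8; have a9 := ker_ae k9.
have [Iint E] := int_terms hs.
have hae : \forall z \ae mu, setT z -> (evalterms s z)%:E = (cst 0%E : R * R -> \bar R) z.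
  apply: filterS (filterI (filterI a7 a8) a9) => z [[e7 e8] e9] _ /=.
  by rewrite (hz z (var3 hb k7 k8 k9 (e7 I) (e8 I) (e9 I))).
have := ae_eq_integral (cst 0%E) _ measurableT (measurable_int mu Iint) (measurable_cst _) hae.
by rewrite integral0 E => -[].
Qed.

End Fwd.

Unset Implicit Arguments. Set Strict Implicit. Set Printing Implicit Defensive.

Theorem theorem4p2 (R : realType) (beta : nat -> nat -> R) (pts : 'I_7 -> R * R) :
  psd (M3 beta) ->
  pd (M2 beta) ->
  injective pts ->
  (forall z : R * R, variety beta z <-> exists k : 'I_7, pts k = z) ->
  \rank (M3 beta) = 7%N ->
  cols_basis B1 (M3 beta) ->
  let a := invmx (WB B1 pts) *m (\col_(k < 7) ((pts k).1 ^+ 4)) in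
  has_rep_measure beta <->
  (weakly_consistent beta /\
   forall i j : nat, (i + j <= 2)%N -> Riesz beta (shifted_relation a i j) = 0).
Proof.
move=> psdM _ _ hV _ hb a.
have aE : a = invmx (WB B1 pts) *m \col_(k < 7) ((pts k).1 ^+ 4) by [].
have Rok : WB B1 pts \in unitmx -> forall i j m,
    evalterms (shifted_relation a i j) (pts m) = 0.
  move=> WBu i j m.
  rewrite /evalterms /shifted_relation big_cons big_map big_enum /= mul1r.
  have -> : mon (i + 4, j)%N (pts m) = mon (i, j)%N (pts m) * mon (4, 0)%N (pts m).
    by rewrite -monD /eadd /= addn0.
  rewrite -(a_rel WBu aE m) big_distrr -big_split /=.
  apply: big1 => k _.
  have := monD (i, j)%N (mono (B1 k)) (pts m); rewrite /eadd /= => ->; ring.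
split.
  case=> mu hmu.
  have wc : weakly_consistent beta.
    move=> c hc; apply/matrixP => r j; rewrite ord1 [RHS]mxE.
    transitivity (Riesz beta [seq (c k 0, eadd (mono r) (mono k)) | k <- enum 'I_10]).
      rewrite /Riesz big_map big_enum mxE /=; apply: eq_bigr => k _.
      by rewrite M3E mulrC.
    apply: (vanish hmu hb).
      rewrite all_map; apply/allP => k _ /=.
      by have := mono_deg r; have := mono_deg k; lia.
    move=> z hz; rewrite /evalterms big_map big_enum /=.
    transitivity (mon (mono r) z * peval3 c z); last by rewrite hc // mulr0.
    rewrite peval3E big_distrr /=; apply: eq_bigr => k _; rewrite monD; ring.
  have WBu := WB_unit hV hb wc.
  split=> // i j hij; apply: (vanish hmu hb).
    rewrite /shifted_relation /= all_map; apply/andP; split; first by lia.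
    apply/allP => k _ /=; have [_ h] := keyB1 k; lia.
  by move=> z /hV [m <-]; exact: Rok.
case=> wc hR.
have WBu := WB_unit hV hb wc.
have hR0 : forall i, (i <= 2)%N -> Riesz beta (shifted_relation a i 0) = 0.
  by move=> i hi; apply: hR; rewrite addn0.
have r0 := rho_ge0 psdM hV hb WBu aE hR0.
exists (@dmeas _ pts (fun k => rho beta pts k 0) r0).
move=> i j hij.
have [I E] := dmeas_int pts r0 (mon_meas (i, j)).
split; first exact: I.
have -> : (\int[dmeas pts r0]_z (z.1 ^+ i * z.2 ^+ j)%:E =
    \int[dmeas pts r0]_z (mon (i, j) z)%:E)%E by [].
by rewrite E -(Dzero hV hb WBu aE hR0 (e := (i, j)) hij).
Qed.
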